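(* Let $k\ge d$. Draw $(\mathbf x_1,\dots,\mathbf x_k)\sim\mathrm{VS}_{D_{\mathcal X}}^k$ and then, conditionally on these points, draw $y_i\sim D_{\mathcal Y|\mathbf x=\mathbf x_i}$ independently for $i=1,\dots,k$; call the law of ${\mathbb S}=\{(\mathbf x_1,y_1),\dots,(\mathbf x_k,y_k)\}$ $\mathrm{VS}_D^k$. Then $\mathbb E_{\mathrm{VS}_D^k}[\mathbf w^*({\mathbb S})]=\mathbf w^*_D$.
   Context: $D$ is a probability distribution of $(\mathbf x,y)\in\mathbb R^d\times\mathbb R$ with $\mathbb E\|\mathbf x\|^2<\infty$, $\mathbb E[y^2]<\infty$; $D_{\mathcal X}$ is the marginal of $\mathbf x$ and $D_{\mathcal Y|\mathbf x}$ the conditional law of $y$ given $\mathbf x$. $\boldsymbol\Sigma_{D_{\mathcal X}}:=\mathbb E[\mathbf x\mathbf x^\top]$ is assumed invertible. $\mathbf w^*_D:=\boldsymbol\Sigma_{D_{\mathcal X}}^{-1}\mathbb E_D[\mathbf x y]$ (the minimizer of $\mathbb E_D[(\mathbf x^\top\mathbf w-y)^2]$). For a sample ${\mathbb S}$ with design matrix $\mathbf X\in\mathbb R^{k\times d}$ (rows $\mathbf x_i^\top$) and responses $\mathbf y\in\mathbb R^k$, $\mathbf w^*({\mathbb S}):=\mathbf X^+\mathbf y$ (the least squares solution, $\mathbf X^+$ the Moore–Penrose pseudoinverse). $D_{\mathcal X}^k$ is the law of $k$ i.i.d. draws from $D_{\mathcal X}$, and $\mathrm{VS}_{D_{\mathcal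 X}}^k$ is the probability measure on $(\mathbb R^d)^k$ given by $\mathrm{VS}_{D_{\mathcal X}}^k(A)=\mathbb E_{D_{\mathcal X}^k}[\mathbf 1_A\det(\sum_{i=1}^k\mathbf x_i\mathbf x_i^\top)]/\big(d!\binom kd\det(\boldsymbol\Sigma_{D_{\mathcal X}})\big)$. *)

(* Defs.v *)
From HB Require Import structures.
From mathcomp Require Import all_boot all_order all_algebra.
From mathcomp Require Import all_classical all_reals all_analysis.
Set Implicit Arguments. Unset Strict Implicit. Unset Printing Implicit Defensive.
Import Order.TTheory GRing.Theory Num.Theory.
Local Open Scope ring_scope.
Local Open Scope ereal_scope.

(* Points of R^d are d.-tuples of reals, equipped with the library's product
   (= Borel) sigma-algebra on n.-tuple R. *)

Section VolumeSampling.
Context {R : realType} {d : nat}.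
Local Notation V := (d.-tuple R).

(* Moore--Penrose pseudoinverse (real matrices), defined by the Penrose
   conditions; it exists and is unique, so xget picks it. *)
Definition mp_pinv (m n : nat) (A : 'M[R]_(m, n)) : 'M[R]_(n, m) :=
  xget 0%R [set B : 'M[R]_(n, m) |
    [/\ (A *m B *m A = A)%R, (B *m A *m B = B)%R,
        ((A *m B)^T = A *m B)%R & ((B *m A)^T = B *m A)%R]].

Definition design_mx (k : nat) (xs : seq V) : 'M[R]_(k, d) :=
  \matrix_(i < k, j < d) tnth (nth (nseq_tuple d 0%R) xs i) j.

Definition resp_vec (k : nat) (ys : seq R) : 'cV[R]_k :=
  \col_(i < k) nth 0%R ys i.

Definition wstar_sample (k : nat) (xs : seq V) (ys : seq R) : 'cV[R]_d :=
  (mp_pinv (design_mx k xs) *m resp_vec k ys)%R.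

Variables (mu : probability V R)
  (kap : probability_kernel V (measurableTypeR R) R).

Definition Sigma_X : 'M[R]_d :=
  \matrix_(i < d, j < d) fine (\int[mu]_x (tnth x i * tnth x j)%:E).

(* E_D[x y], with D the joint law  x ~ mu, y | x ~ kap x *)
Definition cross_moment : 'cV[R]_d :=
  \col_(i < d) fine (\int[mu]_x \int[kap x]_y (tnth x i * y)%:E).

Definition wstar_D : 'cV[R]_d := (invmx Sigma_X *m cross_moment)%R.

(* integral against D_X^n (iterated; x_1 outermost) *)
Fixpoint int_prodX (n : nat) (F : seq V -> \bar R) : \bar R :=
  match n with
  | 0 => F [::]
  | n'.+1 => \int[mu]_x int_prodX n' (fun s => F (x :: s))
  end.

Fixpoint int_resp (xs : seq V) (G : seq R -> \bar R) : \bar R :=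
  match xs with
  | [::] => G [::]
  | x :: xs' => \int[kap x]_y int_resp xs' (fun ys => G (y :: ys))
  end.

(* volume-sampling density det(X^T X) / (d! C(k,d) det Sigma) w.r.t. D_X^k *)
Definition vs_density (k : nat) (xs : seq V) : R :=
  (\det ((design_mx k xs)^T *m design_mx k xs) /
     ((d`!)%:R * ('C(k, d))%:R * \det Sigma_X))%R.

Definition E_VS (k : nat) (f : seq V -> seq R -> R) : \bar R :=
  int_prodX k (fun xs => (vs_density k xs)%:E * int_resp xs (fun ys => (f xs ys)%:E)).

End VolumeSampling.

(* Main.v *)
Require Import Defs.
From HB Require Import structures.
From mathcomp Require Import all_boot all_order all_algebra.
From mathcomp Require Import all_classical all_reals all_analysis.
From mathcomp Require Import measurable_realfun.
From mathcomp Require Import perm fingroup.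
From mathcomp Require Import ring lra.
Import Order.TTheory GRing.Theory Num.Theory.

Module Base.
Import Order.TTheory GRing.Theory Num.Theory.
Import HBNNSimple.
Import HBNNSimple.
Local Open Scope ring_scope.
Local Open Scope classical_set_scope.
Local Open Scope ereal_scope.

Section nullset.
Context d (T : measurableType d) (R : realType) (mu : {measure set T -> \bar R}).

Lemma ge0_le_integral_offnull (N : set T) (f g : T -> \bar R) :
  measurable N -> mu N = 0 -> (forall x, 0 <= f x) -> (forall x, 0 <= g x) ->
  (forall x, ~ N x -> f x <= g x) -> \int[mu]_x f x <= \int[mu]_x g x.
Proof.
move=> mN N0 f0 g0 fg.
rewrite (ge0_integralTE mu f0) (ge0_integralTE mu g0).
apply: ge_ereal_sup => _ [h /= hf <-].
have mNC : measurable (~` N) by exact: measurableC.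
pose h' := mul_nnsfun h (indic_nnsfun R mNC).
have -> : sintegral mu h = sintegral mu h'.
  have := integral_nnsfun mu measurableT h; rewrite patch_setT => <-.
  have := integral_nnsfun mu measurableT h'; rewrite patch_setT => <-.
  apply: ae_eq_integral => //.
  - by apply/measurable_EFinP; exact: measurable_funPT.
  - by apply/measurable_EFinP; exact: measurable_funPT.
  - exists N; split => // x /= /not_implyP [_ hx]; apply: contrapT => Nx; apply: hx.
    by rewrite /h' /= mindicE mem_set// mulr1.
apply: ereal_sup_ubound; exists h' => //= x.
rewrite /h' /= mindicE; have [Nx|Nx] := pselect (N x).
  by rewrite memNset// mulr0.
by rewrite mem_set// mulr1; apply: le_trans (hf x) (fg x Nx).
Qed.

Lemma integral_eq_offnull (N : set T) (f g : T -> \bar R) :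
  measurable N -> mu N = 0 ->
  (forall x, ~ N x -> f x = g x) -> \int[mu]_x f x = \int[mu]_x g x.
Proof.
move=> mN N0 fg; rewrite integralE [RHS]integralE.
have H (u v : T -> \bar R) : (forall x, ~ N x -> u x = v x) ->
    \int[mu]_x (u^\+ x) = \int[mu]_x (v^\+ x).
  move=> uv; apply/eqP; rewrite eq_le; apply/andP; split;
    apply: (@ge0_le_integral_offnull N) => //; try (move=> x; exact: funepos_ge0);
    move=> x Nx; by rewrite !funeposE uv.
congr (_ - _); first exact: H.
rewrite -!funeposN; apply: H => x Nx; by rewrite /= fg.
Qed.

End nullset.

End Base.

Module P2.
Import Order.TTheory GRing.Theory Num.Theory.
Import Base.
Local Open Scope ring_scope.
Local Open Scope classical_set_scope.
Local Open Scope ereal_scope.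

Section kern.
Context {R : realType} {d : nat}.
Local Notation V := (d.-tuple R).
Variables (mu : probability V R)
  (kap : probability_kernel V (measurableTypeR R) R).

Definition M2 (x : V) := \int[kap x]_y (y ^+ 2)%:E.
Definition Gs := [set x : V | M2 x < +oo].
Definition mf (x : V) : R := fine (\int[kap x]_y y%:E).

Lemma M2_ge0 x : 0 <= M2 x.
Proof. by apply: integral_ge0 => y _; rewrite lee_fin sqr_ge0. Qed.

Lemma measurable_M2 : measurable_fun setT M2.
Proof.
apply: (measurable_fun_integral_kernel (measurable_kernel kap)).
  by move=> y; rewrite lee_fin sqr_ge0.
by apply/measurable_EFinP; exact: exprn_measurable.
Qed.

Lemma measurable_nGs : measurable (~` Gs).
Proof.
have -> : ~` Gs = setT `&` M2 @^-1` [set +oo].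
  apply/seteqP; split => x /=.
    by move=> /negP; rewrite -leNgt leye_eq => /eqP.
  by move=> [_ h]; rewrite /Gs /= h ltxx.
exact: measurable_M2 (emeasurable_set1 _).
Qed.

Lemma Gs_null : \int[mu]_x M2 x < +oo -> mu (~` Gs) = 0.
Proof.
move=> fin.
have intM : mu.-integrable setT M2.
  apply/integrableP; split; first exact: measurable_M2.
  by under eq_integral do rewrite gee0_abs ?M2_ge0//.
have [B [mB B0 sB]] := integrable_ae measurableT intM.
apply/eqP; rewrite eq_le measure_ge0 andbT -B0.
apply: le_measure; [apply/mem_set; exact: measurable_nGs|apply/mem_set; exact: mB|].
move=> x /= Gx; apply: sB => /= /(_ I); rewrite ge0_fin_numE ?M2_ge0//.
Qed.

Lemma abs_le_sq1 (y : R) : (`|y| <= 1 + y ^+ 2)%R.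
Proof.
by have [y0|y0] := ger0P y; nra.
Qed.

Lemma kap_int_y x : Gs x -> (kap x).-integrable setT (fun y => y%:E).
Proof.
move=> Gx; apply/integrableP; split.
  by apply/measurable_EFinP; exact: measurable_id.
apply: (@le_lt_trans _ _ (\int[kap x]_y ((1%:E) + (y ^+ 2)%:E))).
  apply: ge0_le_integral => //.
  - apply: measurableT_comp; first exact: abse_measurable.
    by apply/measurable_EFinP; exact: measurable_id.
  - apply: emeasurable_funD; first exact: measurable_cst.
    by apply/measurable_EFinP; exact: exprn_measurable.
  by move=> y _; rewrite -EFinD lee_fin abs_le_sq1.
rewrite ge0_integralD//.
- have := integral_cst (kap x) (@measurableT _ (measurableTypeR R)) 1.
  rewrite /cst => ->; rewrite prob_kernel mul1e.
  exact: lte_add_pinfty (ltry _) Gx.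
- by move=> y _; rewrite lee_fin sqr_ge0.
- by apply/measurable_EFinP; exact: exprn_measurable.
Qed.

Lemma mfE x : Gs x -> (mf x)%:E = \int[kap x]_y y%:E.
Proof. by move=> Gx; rewrite fineK// integrable_fin_num// kap_int_y. Qed.

Lemma measurable_mf : measurable_fun setT mf.
Proof.
apply: (measurableT_comp (fine_measurable measurableT)).
rewrite (_ : (fun x => \int[kap x]_y y%:E) =
   (fun x => \int[kap x]_y ((fun y => y%:E)^\+ y) - \int[kap x]_y ((fun y => y%:E)^\- y))); last first.
  by apply/funext => x; rewrite integralE.
apply: emeasurable_funB.
  apply: (measurable_fun_integral_kernel (measurable_kernel kap)).
    by move=> y; exact: funepos_ge0.
  by apply: measurable_funepos; apply/measurable_EFinP; exact: measurable_id.
apply: (measurable_fun_integral_kernel (measurable_kernel kap)).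
  by move=> y; exact: funeneg_ge0.
by apply: measurable_funeneg; apply/measurable_EFinP; exact: measurable_id.
Qed.

End kern.

End P2.

Module P3.
Import Order.TTheory GRing.Theory Num.Theory.
Import Base P2.
Local Open Scope ring_scope.
Local Open Scope classical_set_scope.
Local Open Scope ereal_scope.

Section iter.
Context {R : realType} {d : nat}.
Local Notation V := (d.-tuple R).
Variables (mu : probability V R)
  (kap : probability_kernel V (measurableTypeR R) R).

Lemma int_prodX_congr (G : set V) n (F F' : seq V -> \bar R) :
  measurable (~` G) -> mu (~` G) = 0 ->
  (forall xs, size xs = n -> (forall x, x \in xs -> G x) -> F xs = F' xs) ->
  int_prodX mu n F = int_prodX mu n F'.
Proof.
move=> mG G0; elim: n F F' => [|n IH] F F' FF' /=.
  by apply: FF' => // x; rewrite in_nil.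
apply: (@integral_eq_offnull _ _ _ mu (~` G)) => // x /= /contrapT Gx.
apply: IH => xs sxs Gxs; apply: FF'; first by rewrite /= sxs.
by move=> z; rewrite in_cons => /orP [/eqP ->|/Gxs].
Qed.

Lemma kap_int_cst x (c : R) : (kap x).-integrable setT (fun _ => c%:E).
Proof.
apply/integrableP; split; first exact: measurable_cst.
have := integral_cst (kap x) (@measurableT _ (measurableTypeR R)) `|c%:E|.
by rewrite /cst => ->; rewrite prob_kernel mule1 ltry.
Qed.

Lemma int_kap_affine x (c a : R) : Gs kap x ->
  \int[kap x]_y (c + a * y)%:E = (c + a * mf kap x)%:E.
Proof.
move=> Gx; under eq_integral do rewrite EFinD EFinM.
rewrite integralD//; [|exact: kap_int_cst|].
- have := integral_cst (kap x) (@measurableT _ (measurableTypeR R)) c%:E.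
  rewrite /cst => ->; rewrite prob_kernel mule1.
  by rewrite integralZl// ?kap_int_y// -mfE// -EFinM -EFinD.
- by apply: integrableZl => //; exact: kap_int_y.
Qed.

Lemma int_resp_affine (xs : seq V) (c0 : R) (a : nat -> R) :
  (forall x, x \in xs -> Gs kap x) ->
  int_resp kap xs (fun ys => (c0 + \sum_(l < size xs) a l * nth 0 ys l)%:E)
  = (c0 + \sum_(l < size xs) a l * mf kap (nth (nseq_tuple d 0) xs l))%:E.
Proof.
elim: xs c0 a => [|x xs IH] c0 a Gxs /=.
  by rewrite !big_ord0.
have Gx : Gs kap x by apply: Gxs; rewrite mem_head.
have Gxs' : forall z, z \in xs -> Gs kap z.
  by move=> z zxs; apply: Gxs; rewrite in_cons zxs orbT.
have H y : int_resp kap xs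
    (fun ys => (c0 + \sum_(l < (size xs).+1) a l * (y :: ys)`_l)%:E) =
    ((c0 + \sum_(i < size xs) a i.+1 * mf kap (nth (nseq_tuple d 0) xs i)) + a 0%N * y)%:E.
  rewrite (_ : (c0 + _ + _ = (c0 + a 0%N * y) + \sum_(i < size xs) a i.+1 * mf kap (nth (nseq_tuple d 0) xs i))%R); last by ring.
  rewrite -(IH (c0 + a 0%N * y)%R (fun l => a l.+1))//; congr int_resp; apply/funext => ys.
  by rewrite big_ord_recl /= addrA.
under eq_integral do rewrite H.
by rewrite int_kap_affine// big_ord_recl /=; congr (_%:E); ring.
Qed.

End iter.

End P3.

Module P4.
Import Order.TTheory GRing.Theory Num.Theory.
Import Base P2 P3.
Local Open Scope ring_scope.
Local Open Scope classical_set_scope.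
Local Open Scope ereal_scope.

Section prodlemma.
Context {R : realType} {d : nat}.
Local Notation V := (d.-tuple R).
Variables (mu : probability V R).

Fixpoint pprod (phi : nat -> V -> R) (xs : seq V) : R :=
  match xs with
  | [::] => 1%R
  | x :: xs' => (phi 0%N x * pprod (fun l => phi l.+1) xs')%R
  end.

Lemma pprodE phi xs :
  pprod phi xs = (\prod_(l < size xs) phi l (nth (nseq_tuple d 0) xs l))%R.
Proof.
elim: xs phi => [|x xs IH] phi /=; first by rewrite big_ord0.
by rewrite big_ord_recl /= IH.
Qed.

Lemma int_prodX_prod (I : finType) n (c : I -> R) (phi : I -> nat -> V -> R) :
  (forall t, c t != 0%R -> forall l, (l < n)%N ->
      mu.-integrable setT (fun x => (phi t l x)%:E)) ->
  int_prodX mu n (fun xs => (\sum_t c t * pprod (phi t) xs)%:E) =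
  (\sum_t c t * \prod_(l < n) fine (\int[mu]_x (phi t l x)%:E))%:E.
Proof.
elim: n c phi => [|n IH] c phi hint /=.
  by congr (_%:E); apply: eq_bigr => t _; rewrite big_ord0.
set P := fun t => (\prod_(l < n) fine (\int[mu]_x (phi t l.+1 x)%:E))%R.
have H x : int_prodX mu n
      (fun s => (\sum_t c t * pprod (phi t) (x :: s))%:E) =
    (\sum_t (c t * P t) * phi t 0%N x)%:E.
  transitivity (int_prodX mu n
      (fun s => (\sum_t (c t * phi t 0%N x) * pprod (fun l => phi t l.+1) s)%:E)).
    congr int_prodX; apply/funext => s; congr (_%:E).
    by apply: eq_bigr => t _ /=; rewrite mulrA.
  rewrite IH; last first.
    move=> t ct l ln; apply: hint => //.
    by apply: contraNneq ct => ->; rewrite mul0r.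
  congr (_%:E); apply: eq_bigr => t _; rewrite /P; ring.
under eq_integral do rewrite H.
have hint' t : mu.-integrable setT (fun x => ((c t * P t) * phi t 0%N x)%:E).
  have [->|ct] := eqVneq (c t) 0%R.
    apply: (eq_integrable _ (cst 0%E)) => //; last exact: integrable0.
    by move=> x _; rewrite mul0r mul0r.
  under eq_fun do rewrite EFinM.
  by apply: integrableZl => //; exact: hint.
under eq_integral do rewrite -sumEFin.
rewrite integral_sum//.
rewrite -sumEFin; apply: eq_bigr => t _.
have [->|ct] := eqVneq (c t) 0%R.
  rewrite !mul0r; under eq_integral do rewrite !mul0r.
  by rewrite integral0.
under eq_integral do rewrite EFinM.
rewrite integralZl//; last exact: hint.
rewrite big_ord_recl -/(P t) /=.
have -> : (\int[mu]_x (phi t 0%N x)%:E) =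
    (fine (\int[mu]_x (phi t 0%N x)%:E))%:E.
  by rewrite fineK//; apply: integrable_fin_num => //; exact: hint.
by rewrite -EFinM; congr (_%:E); ring.
Qed.

End prodlemma.

End P4.

Module P5.
Import Order.TTheory GRing.Theory Num.Theory.
Import Base P2 P3 P4.
Local Open Scope ring_scope.

Section linalg.
Context {R : realType}.

Lemma mp_pinvE k d (A : 'M[R]_(k, d)) : A^T *m A \in unitmx ->
  mp_pinv A = invmx (A^T *m A) *m A^T.
Proof.
move=> uN; set N := A^T *m A.
have NT : N^T = N by rewrite /N trmx_mul trmxK.
have P0A : invmx N *m A^T *m A = 1%:M by rewrite -mulmxA mulVmx.
apply: xget_unique.
  split.
  - by rewrite -mulmxA P0A mulmx1.
  - by rewrite P0A mul1mx.
  - by rewrite mulmxA !trmx_mul trmxK trmx_inv NT mulmxA.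
  - by rewrite P0A trmx1.
move=> B [h1 _ h3 _].
have : N *m B = A^T.
  by rewrite /N -mulmxA -h3 -trmx_mul h1.
by move=> <-; rewrite mulKmx.
Qed.

Definition colrep p d (M : 'M[R]_(p, d)) (j : 'I_d) (b : 'cV[R]_p) : 'M[R]_(p, d) :=
  \matrix_(a, c) if c == j then b a 0 else M a c.
Arguments colrep {p d}.

Lemma cofactor_colrep d (M : 'M[R]_d) j b l :
  cofactor (colrep M j b) l j = cofactor M l j.
Proof.
rewrite /cofactor; congr (_ * \det _); apply/matrixP => a c.
by rewrite !mxE eq_sym (negbTE (neq_lift j c)).
Qed.

Lemma cramer d (M : 'M[R]_d) (b : 'cV[R]_d) j : M \in unitmx ->
  (invmx M *m b) j 0 = \det (colrep M j b) / \det M.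
Proof.
move=> uM; rewrite /invmx uM -scalemxAl mxE mxE.
rewrite mulrC; congr (_ * _); rewrite (expand_det_col _ j); apply: eq_bigr => l _.
by rewrite cofactor_colrep !mxE eqxx mulrC.
Qed.

Lemma colrep_mul p k d (A : 'M[R]_(p, k)) (M : 'M[R]_(k, d)) j (b : 'cV[R]_k) :
  colrep (A *m M) j (A *m b) = A *m colrep M j b.
Proof.
apply/matrixP => a c; rewrite !mxE.
case: (eqVneq c j) => [->|cj].
  by apply: eq_bigr => i _; rewrite !mxE eqxx.
by apply: eq_bigr => i _; rewrite !mxE (negbTE cj).
Qed.

Lemma det_XTZ k d (X : 'M[R]_(k, d)) (m : 'cV[R]_k) j :
  \det (X^T *m X) * (mp_pinv X *m m) j 0 = \det (X^T *m colrep X j m).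
Proof.
have [u|nu] := boolP (X^T *m X \in unitmx).
  rewrite mp_pinvE// -mulmxA cramer// colrep_mul mulrC -mulrA mulVf ?mulr1//.
  by move: u; rewrite unitmxE unitfE.
have : \det (X^T *m X) == 0 by move: nu; rewrite unitmxE unitfE negbK.
move=> /eqP ->; rewrite mul0r; apply/esym/eqP/det0P.
move: nu; rewrite unitmxE unitfE negbK => /det0P [v v0 vN].
exists v => //.
have Xv : v *m X^T = 0.
  have : (v *m X^T) *m (v *m X^T)^T = 0.
    by rewrite trmx_mul trmxK mulmxA -(mulmxA v) vN mul0mx.
  move=> /matrixP /(_ 0 0); rewrite !mxE => /eqP h; apply/matrixP => a b; rewrite !mxE.
  move: h.
  rewrite psumr_eq0; last by move=> i _; rewrite !mxE -expr2 sqr_ge0.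
  move=> /allP /(_ b (mem_index_enum _)); rewrite !mxE -expr2 sqrf_eq0 => /eqP.
  by rewrite (ord1 a).
by rewrite mulmxA Xv mul0mx.
Qed.

End linalg.
Arguments colrep {R p d}.

End P5.

Module P6.
Import Order.TTheory GRing.Theory Num.Theory.
Import Base P2 P3 P4 P5.
Local Open Scope ring_scope.

Section detexp.
Variable (R : comPzRingType).

Lemma det_XTZ_expand k d (X Z : 'M[R]_(k, d)) :
  \det (X^T *m Z) = \sum_(f : {ffun 'I_d -> 'I_k}) \sum_(s : 'S_d)
     (if injectiveb f then (-1) ^+ s * \prod_i (X (f i) i * Z (f i) (s i)) else 0).
Proof.
rewrite /determinant.
under eq_bigr => s _.
  rewrite (eq_bigr (fun i => \sum_l X l i * Z l (s i))); last first.
    by move=> i _; rewrite !mxE; apply: eq_bigr => l _; rewrite mxE.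
  rewrite bigA_distr_bigA big_distrr /=.
  over.
rewrite exchange_big; apply: eq_bigr => f _.
case: (boolP (injectiveb f)) => // /injectivePn [i1 [i2 i12 fi12]].
transitivity ((\prod_i X (f i) i) * \det (\matrix_(i, b) Z (f i) b)).
  rewrite /determinant big_distrr; apply: eq_bigr => s _ /=.
  rewrite big_split /= mulrCA; congr (_ * (_ * _)).
  by apply: eq_bigr => i _; rewrite mxE.
rewrite (determinant_alternate i12) ?mulr0; first by rewrite big1.
by move=> b; rewrite !mxE fi12.
Qed.

End detexp.

End P6.

Module P7.
Import Order.TTheory GRing.Theory Num.Theory.
Import Base P2 P3 P4 P5 P6.
Local Open Scope ring_scope.
Local Open Scope classical_set_scope.
Local Open Scope ereal_scope.

Section integ.
Context {R : realType} {d : nat}.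
Local Notation V := (d.-tuple R).
Variables (mu : probability V R)
  (kap : probability_kernel V (measurableTypeR R) R).
Hypothesis hx : \int[mu]_x (\sum_(i < d) tnth x i ^+ 2)%:E < +oo.
Hypothesis hy : \int[mu]_x \int[kap x]_y (y ^+ 2)%:E < +oo.

Definition Sx (x : V) : R := \sum_(i < d) tnth x i ^+ 2.

Lemma measurable_tn (a : 'I_d) : measurable_fun setT (fun x : V => tnth x a).
Proof. exact: measurable_tnth. Qed.

Lemma measurable_Sx : measurable_fun setT Sx.
Proof.
rewrite /Sx. exact: (@measurable_sum _ _ _ setT _ (index_enum 'I_d) (fun i (x : V) => tnth x i ^+ 2)%R
   (fun i => measurableT_comp (exprn_measurable _) (measurable_tn i))).
Qed.

Lemma int_Sx : mu.-integrable setT (fun x => (Sx x)%:E).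
Proof.
apply/integrableP; split; first by apply/measurable_EFinP; exact: measurable_Sx.
have e x : `|(Sx x)%:E| = (Sx x)%:E.
  by rewrite gee0_abs// lee_fin sumr_ge0// => i _; exact: sqr_ge0.
under eq_integral do rewrite e.
exact: hx.
Qed.

Lemma int_M2 : mu.-integrable setT (M2 kap).
Proof.
apply/integrableP; split; first exact: measurable_M2.
by under eq_integral do rewrite gee0_abs ?M2_ge0//.
Qed.

Lemma sq_le_Sx (x : V) a : (tnth x a ^+ 2 <= Sx x)%R.
Proof.
rewrite /Sx (bigD1 a)//= lerDl; apply: sumr_ge0 => i _; exact: sqr_ge0.
Qed.

Lemma int_xx (a b : 'I_d) : mu.-integrable setT (fun x => (tnth x a * tnth x b)%:E).
Proof.
apply: (le_integrable _ _ _ int_Sx) => //.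
  by apply/measurable_EFinP; apply: measurable_funM; exact: measurable_tn.
move=> x _; rewrite (gee0_abs (x := (Sx x)%:E)); last first.
  by rewrite lee_fin sumr_ge0// => i _; exact: sqr_ge0.
rewrite abse_EFin lee_fin.
have ha := sq_le_Sx x a; have hb := sq_le_Sx x b.
have [h|h] := ger0P (tnth x a * tnth x b)%R; nra.
Qed.

Lemma int_xm (a : 'I_d) : mu.-integrable setT (fun x => (tnth x a * mf kap x)%:E).
Proof.
apply: (le_integrable _ _ _ (integrableD _ int_Sx int_M2)) => //.
  apply: (measurableT_comp (@EFin_measurable R setT)).
  by apply: measurable_funM; [exact: measurable_tn|exact: measurable_mf].
move=> x _; rewrite (gee0_abs (adde_ge0 _ (M2_ge0 _ _))); last first.
  by rewrite lee_fin sumr_ge0// => i _; exact: sqr_ge0.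
have [Gx|nGx] := pselect (Gs kap x); last first.
  have -> : M2 kap x = +oo.
    by move/negP: nGx; rewrite /Gs /= -leNgt leye_eq => /eqP.
  by rewrite addey// leey.
rewrite EFinM abseM mfE//.
apply: (le_trans (lee_wpmul2l _ (le_abse_integral _ _ _))) => //.
rewrite -ge0_integralZl//; last first.
  by apply: measurableT_comp; [exact: abse_measurable|apply/measurable_EFinP; exact: measurable_id].
apply: (@le_trans _ _ (\int[kap x]_y ((tnth x a ^+ 2)%:E + (y ^+ 2)%:E))).
  apply: ge0_le_integral => //.
  - apply: emeasurable_funM; first exact: measurable_cst.
    by apply: measurableT_comp; [exact: abse_measurable|apply/measurable_EFinP; exact: measurable_id].
  - apply: emeasurable_funD; first exact: measurable_cst.
    by apply/measurable_EFinP; exact: exprn_measurable.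
  move=> y _; rewrite !abse_EFin -EFinM -EFinD lee_fin -normrM.
  have [h|h] := ger0P (tnth x a * y)%R; nra.
rewrite ge0_integralD//; try (by move=> y _; rewrite lee_fin sqr_ge0);
  try (by apply/measurable_EFinP; exact: exprn_measurable); try exact: measurable_cst.
have := integral_cst (kap x) (@measurableT _ (measurableTypeR R)) (tnth x a ^+ 2)%:E.
rewrite /cst => ->; rewrite prob_kernel mule1.
by rewrite leeD// lee_fin sq_le_Sx.
Qed.

End integ.

End P7.

Module P8.
Import Order.TTheory GRing.Theory Num.Theory.
Import Base P2 P3 P4 P5 P6 P7.
Local Open Scope ring_scope.

Section regroup.
Variable (R : comPzRingType).

Lemma regroup d k (f : 'I_d -> 'I_k) (F : 'I_d -> nat -> R) :
  \prod_(l < k) \prod_(i | (f i : nat) == l) F i l = \prod_i F i (f i).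
Proof.
rewrite (eq_bigr (fun l : 'I_k => \prod_i (if (f i : nat) == l then F i l else 1))); last first.
  by move=> l _; rewrite big_mkcond.
rewrite exchange_big; apply: eq_bigr => i _ /=.
by rewrite -big_mkcond /= (big_pred1 (f i)) // => l /=; rewrite eq_sym.
Qed.

Lemma inj_pick d k (f : 'I_d -> 'I_k) (l : nat) : injective f ->
  (exists i0, forall i, ((f i : nat) == l) = (i == i0)) \/
  (forall i, (f i : nat) != l).
Proof.
move=> finj; case: (pickP (fun i => (f i : nat) == l)) => [i0 h|h]; last first.
  by right => i; rewrite h.
left; exists i0 => i; apply/idP/idP => [/eqP hi|/eqP ->//].
by apply/eqP/finj/val_inj => /=; rewrite hi; apply/esym/eqP.
Qed.

End regroup.

Section main.
Context {R : realType} {d : nat}.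
Local Notation V := (d.-tuple R).
Variables (mu : probability V R)
  (kap : probability_kernel V (measurableTypeR R) R) (j : 'I_d).

Definition zf (x : V) (b : 'I_d) : R := if b == j then mf kap x else tnth x b.
Definition mvec k (xs : seq V) : 'cV[R]_k :=
  \col_(l < k) mf kap (nth (nseq_tuple d 0) xs l).
Definition cc k : R := (d`!)%:R * ('C(k, d))%:R * \det (Sigma_X mu).

Lemma vs_point (xs : seq V) : (forall x, x \in xs -> Gs kap x) ->
  ((vs_density mu (size xs) xs)%:E *
    int_resp kap xs (fun ys => (wstar_sample (size xs) xs ys j 0)%:E))%E
  = (\det ((design_mx (size xs) xs)^T *m
       colrep (design_mx (size xs) xs) j (mvec (size xs) xs)) / cc (size xs))%:E.
Proof.
move=> Gxs.
set n := size xs; set X := design_mx n xs; set P := mp_pinv X.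
pose a := fun l => nth 0 [seq P j i | i <- enum 'I_n] l.
have ha (i : 'I_n) : a i = P j i.
  by rewrite /a (nth_map i) ?size_enum_ord ?ltn_ord// nth_ord_enum.
have e : (fun ys => (wstar_sample n xs ys j 0)%:E) =
    (fun ys => (0 + \sum_(l < size xs) a l * nth 0 ys l)%:E).
  apply/funext => ys; rewrite /wstar_sample mxE add0r.
  by congr (_%:E); apply: eq_bigr => i _; rewrite ha mxE.
rewrite e int_resp_affine// add0r.
have -> : \sum_(l < size xs) a l * mf kap (nth (nseq_tuple d 0) xs l) =
    (P *m mvec n xs) j 0.
  by rewrite mxE; apply: eq_bigr => i _; rewrite ha mxE.
rewrite /vs_density -EFinM; congr (_%:E).
by rewrite -/X -det_XTZ -/P mulrAC.
Qed.

Definition Iset k := ({ffun 'I_d -> 'I_k} * {perm 'I_d})%type.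
Definition ct k (t : Iset k) : R :=
  if injectiveb t.1 then (-1) ^+ t.2 / cc k else 0.
Definition phi k (t : Iset k) (l : nat) (x : V) : R :=
  \prod_(i < d | (t.1 i : nat) == l) (tnth x i * zf x (t.2 i)).
Arguments ct {k}. Arguments phi {k}.

Lemma expand k xs : size xs = k ->
  \det ((design_mx k xs)^T *m colrep (design_mx k xs) j (mvec k xs)) / cc k
  = \sum_(t : Iset k) ct t * pprod (phi t) xs.
Proof.
move=> sxs.
rewrite det_XTZ_expand big_distrl /=.
rewrite [RHS](eq_bigr (fun t => ct (t.1, t.2) * pprod (phi (t.1, t.2)) xs)); last by move=> [].
rewrite -(pair_big xpredT xpredT (fun f s => ct (f, s) * pprod (phi (f, s)) xs)) /=.
apply: eq_bigr => f _; rewrite big_distrl; apply: eq_bigr => s _ /=; rewrite /ct /=.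
case: injectiveb; last by rewrite !mul0r.
rewrite pprodE /phi /= sxs.
rewrite (@regroup _ _ _ f (fun i l => tnth (nth (nseq_tuple d 0) xs l) i *
   zf (nth (nseq_tuple d 0) xs l) (s i))).
rewrite mulrAC; congr (_ * _); apply: eq_bigr => i _.
by rewrite !mxE /zf; case: eqP => _; rewrite ?mxE.
Qed.

Section integ2.
Hypothesis hx : (\int[mu]_x (\sum_(i < d) tnth x i ^+ 2)%:E < +oo)%E.
Hypothesis hy : (\int[mu]_x \int[kap x]_y (y ^+ 2)%:E < +oo)%E.

Definition Sg (a b : 'I_d) : R := fine (\int[mu]_x (tnth x a * zf x b)%:E)%E.

Lemma int_zf a b : mu.-integrable setT (fun x => (tnth x a * zf x b)%:E).
Proof.
rewrite /zf; case: eqP => _; first exact: int_xm.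
exact: int_xx.
Qed.

Lemma phi_cases k (t : Iset k) l : injectiveb t.1 ->
  (exists i0, (phi t l = (fun x => tnth x i0 * zf x (t.2 i0))) /\
     ((\prod_(i | (t.1 i : nat) == l) Sg i (t.2 i)) = Sg i0 (t.2 i0))) \/
  ((phi t l = (fun _ => 1)) /\ ((\prod_(i | (t.1 i : nat) == l) Sg i (t.2 i)) = 1)).
Proof.
move=> /injectiveP finj; case: (@inj_pick _ _ _ l finj) => [[i0 hi]|hn].
  left; exists i0; split; last by rewrite (big_pred1 i0).
  by apply/funext => x; rewrite /phi (big_pred1 i0).
right; split; last by rewrite big_pred0// => i; rewrite (negbTE (hn i)).
by apply/funext => x; rewrite /phi big_pred0// => i; rewrite (negbTE (hn i)).
Qed.

Lemma phi_int k (t : Iset k) l : injectiveb t.1 ->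
  mu.-integrable setT (fun x => (phi t l x)%:E).
Proof.
move=> /(@phi_cases _ _ l) [[i0 [-> _]]|[-> _]]; first exact: int_zf.
exact: (finite_measure_integrable_cst mu 1).
Qed.

Lemma phi_integral k (t : Iset k) l : injectiveb t.1 ->
  fine (\int[mu]_x (phi t l x)%:E)%E = \prod_(i | (t.1 i : nat) == l) Sg i (t.2 i).
Proof.
move=> /(@phi_cases _ _ l) [[i0 [-> ->]]|[-> ->]]//.
have := integral_cst mu (@measurableT _ V) 1%E.
rewrite /cst => ->; rewrite mul1e.
by apply: (@eq_trans _ _ (fine 1%E)); [congr fine; exact: probability_setT|].
Qed.

Lemma sum_part k :
  \sum_(t : Iset k) ct t * \prod_(l < k) fine (\int[mu]_x (phi t l x)%:E)%E
  = ((k ^_ d)%:R * \det (\matrix_(a, b) Sg a b)) / cc k.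
Proof.
transitivity (\sum_(t : Iset k) ct t * \prod_i Sg i (t.2 i)).
  apply: eq_bigr => t _; rewrite /ct; case: (boolP (injectiveb t.1)) => inj;
    last by rewrite !mul0r.
  congr (_ * _).
  rewrite (eq_bigr (fun l : 'I_k => \prod_(i | (t.1 i : nat) == l) Sg i (t.2 i))).
    exact: (@regroup _ _ _ t.1 (fun i _ => Sg i (t.2 i))).
  by move=> l _; exact: phi_integral.
rewrite [LHS](eq_bigr (fun t => ct (t.1, t.2) * \prod_i Sg i ((t.1, t.2).2 i))); last by move=> [].
rewrite -(pair_big xpredT xpredT (fun f s => ct (f, s) * \prod_i Sg i ((f, s).2 i))) /=.
rewrite (eq_bigr (fun f : {ffun 'I_d -> 'I_k} =>
   if injectiveb f then \det (\matrix_(a, b) Sg a b) / cc k else 0)); last first.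
  move=> f _; rewrite /ct /=; case: injectiveb; last by rewrite big1// => s _; rewrite mul0r.
  rewrite /determinant big_distrl /=.
  apply: congr_big => // s _.
  by rewrite mulrAC; congr (_ * _ * _); apply: eq_bigr => i _; rewrite mxE.
rewrite -big_mkcond /= sumr_const.
have -> : #|[pred f : {ffun 'I_d -> 'I_k} | injectiveb f]| = (k ^_ d)%N.
  by have := card_inj_ffuns 'I_d 'I_k; rewrite !card_ord => <-; rewrite cardsE.
by rewrite -[LHS]mulr_natl mulrA.
Qed.

Lemma Sg_eq : \matrix_(a, b) Sg a b = colrep (Sigma_X mu) j (cross_moment mu kap).
Proof.
apply/matrixP => a b; rewrite !mxE /Sg /zf.
case: eqP => // _; congr fine.
apply/esym; apply: (@integral_eq_offnull _ _ _ mu (~` Gs kap)%classic).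
- exact: measurable_nGs.
- exact: Gs_null.
move=> x /= /contrapT Gx.
have := @int_kap_affine _ _ kap x 0%R (tnth x a) Gx.
rewrite add0r => <-; apply: eq_integral => y _; by rewrite add0r.
Qed.

End integ2.

End main.

End P8.

Import Base P2 P3 P4 P5 P6 P7 P8.
Local Open Scope ring_scope.
Local Open Scope ring_scope.

Theorem theorem2 (R : realType) (d k : nat)
  (mu : probability (d.-tuple R) R)
  (kap : probability_kernel (d.-tuple R) (measurableTypeR R) R) :
  (d <= k)%N ->
  (\int[mu]_x (\sum_(i < d) tnth x i ^+ 2)%:E < +oo)%E ->
  (\int[mu]_x \int[kap x]_y (y ^+ 2)%:E < +oo)%E ->
  Sigma_X mu \in unitmx ->
  forall j : 'I_d,
    E_VS mu kap k (fun xs ys => wstar_sample k xs ys j 0) = (wstar_D mu kap j 0)%:E.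
Proof.
move=> hk hx hy hS j.
rewrite /E_VS.
rewrite (@int_prodX_congr _ _ mu (Gs kap) k _
  (fun xs => (\det ((design_mx k xs)^T *m colrep (design_mx k xs) j (mvec kap k xs))
     / cc mu k)%:E)); last 3 first.
- exact: measurable_nGs.
- exact: Gs_null.
- by move=> xs sxs Gxs; rewrite -sxs; exact: vs_point.
rewrite (@int_prodX_congr _ _ mu setT%classic k _
  (fun xs => (\sum_(t : Iset k) ct mu k t * pprod (phi kap j k t) xs)%:E)); last 3 first.
- by rewrite setCT.
- by rewrite setCT measure0.
- by move=> xs sxs _; rewrite (P8.expand mu kap j k xs sxs).
rewrite int_prodX_prod; last first.
  move=> t ct0 l _; apply: (phi_int mu kap j hx hy) => //.
  by move: ct0; rewrite /ct; case: injectiveb; rewrite ?eqxx.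
rewrite (sum_part mu kap j k) (Sg_eq mu kap j hy).
rewrite /wstar_D cramer//; congr (_%:E).
have ud : \det (Sigma_X mu) != 0 by move: hS; rewrite unitmxE unitfE.
have uk : (k ^_ d)%:R != 0 :> R by rewrite pnatr_eq0 -lt0n ffact_gt0.
rewrite /cc -natrM mulnC bin_ffact; field.
by rewrite ud uk.
Qed.
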